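(* Let $\mathcal{D}=\{(\mathbf{x}_1,y_1),\ldots,(\mathbf{x}_n,y_n)\}$, $\mathbf{x}_i\in\mathbb{R}^d$, $1\le m<n$, $\mathcal{D}_m=\{(\mathbf{x}_{n-m+1},y_{n-m+1}),\ldots,(\mathbf{x}_n,y_n)\}$. Let $\ell$ be a convex loss, differentiable everywhere, twice differentiable in its first argument, and $\lambda>0$. For a dataset $S$ let $L(\mathbf{w};S)=\sum_{(\mathbf{x},y)\in S}\ell(\mathbf{w}^\top\mathbf{x},y)+\frac{\lambda|S|}{2}\|\mathbf{w}\|_2^2$. Let $\mathbf{w}^*=\arg\min L(\cdot;\mathcal{D})$, $$\Delta^{(m)}=m\lambda\mathbf{w}^*+\sum_{j=n-m+1}^n\nabla\ell((\mathbf{w}^* )^\top\mathbf{x}_j,y_j),\quad H^{(m)}_{\mathbf{w}^*}=\nabla^2L(\mathbf{w}^*;\mathcal{D}\setminus\mathcal{D}_m),\quad \mathbf{w}^{(-m)}=\mathbf{w}^*+\big[H^{(m)}_{\mathbf{w}^*}\big]^{-1}\Delta^{(m)}.$$ Suppose that $\|\nabla\ell(\mathbf{w}^\top\mathbf{x}_i,y_i)\|_2\le C$ for all $(\mathbf{x}_i,y_i)\in\mathcal{D}$ and $\mathbf{w}\in\mathbb{R}^d$, that $\ell''$ is $\gamma$-Lipschitz, and that $\|\mathbf{x}_i\|_2\le1$ for all $i$. Then $$\|\nabla L(\mathbf{w}^{(-m)};\mathcal{D}\setminus\mathcal{D}_m)\|_2\le\gamma(n-m)\Big\|\big[H^{(m)}_{\mathbf{w}^*}\big]^{-1}\Delta^{(m)}\Big\|_2^2\le\frac{4\gamma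 m^2C^2}{\lambda^2(n-m)}.$$
   Context: Gradients/Hessians are with respect to $\mathbf{w}$; $\ell''$ is the second derivative of $\ell$ in its first argument. *)

(* Defs.v *)
From HB Require Import structures.
From mathcomp Require Import all_boot all_order all_algebra.
From mathcomp Require Import all_classical all_reals all_analysis.
Set Implicit Arguments. Unset Strict Implicit. Unset Printing Implicit Defensive.
Import Order.TTheory GRing.Theory Num.Theory.
Import numFieldNormedType.Exports.
Local Open Scope ring_scope.

Section Defs.
Variable R : realType.

Definition dotv (d : nat) (u v : 'cV[R]_d) : R := \sum_(k < d) u k 0 * v k 0.
Definition norm2 (d : nat) (v : 'cV[R]_d) : R := Num.sqrt (dotv v v).

Definition basisv (d : nat) (k : 'I_d) : 'cV[R]_d := delta_mx k 0.

Definition grad (d : nat) (f : 'cV[R]_d -> R) (w : 'cV[R]_d) : 'cV[R]_d :=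
  \col_(k < d) 'D_(basisv k) f w.
Definition hess (d : nat) (f : 'cV[R]_d -> R) (w : 'cV[R]_d) : 'M[R]_d :=
  \matrix_(k < d, j < d) 'D_(basisv j) (fun u => 'D_(basisv k) f u) w.

Definition dl1 (l : R -> R -> R) (z y : R) : R := derive1 (fun t => l t y) z.
Definition dl2 (l : R -> R -> R) (z y : R) : R := derive1 (fun t => dl1 l t y) z.

Definition loss_convex (l : R -> R -> R) : Prop :=
  forall (y z1 z2 t : R), 0 <= t <= 1 ->
    l (t * z1 + (1 - t) * z2) y <= t * l z1 y + (1 - t) * l z2 y.

Definition regL (n d : nat) (l : R -> R -> R) (lam : R)
    (x : 'I_n -> 'cV[R]_d) (y : 'I_n -> R) (S : {set 'I_n}) (w : 'cV[R]_d) : R :=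
  \sum_(i in S) l (dotv w (x i)) (y i) + lam * (#|S|%:R) / 2 * norm2 w ^+ 2.

End Defs.

(* Main.v *)
Require Import Defs.
From HB Require Import structures.
From mathcomp Require Import all_boot all_order all_algebra.
From mathcomp Require Import all_classical all_reals all_analysis.
From mathcomp Require Import ring lra.
Import Order.TTheory GRing.Theory Num.Theory.
Import numFieldNormedType.Exports.
Local Open Scope ring_scope.


Lemma dotvDl {R : realType} {d : nat} (u v w : 'cV[R]_d) :
  dotv (u + v) w = dotv u w + dotv v w.
Proof. by rewrite /dotv -big_split; apply: eq_bigr => k _; rewrite mxE mulrDl. Qed.

Lemma dotvZl {R : realType} {d : nat} (a : R) (u w : 'cV[R]_d) :
  dotv (a *: u) w = a * dotv u w.
Proof. by rewrite /dotv mulr_sumr; apply: eq_bigr => k _; rewrite mxE mulrA. Qed.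

Lemma dotvC {R : realType} {d : nat} (u w : 'cV[R]_d) : dotv u w = dotv w u.
Proof. by rewrite /dotv; apply: eq_bigr => k _; rewrite mulrC. Qed.

Lemma dotvDr {R : realType} {d : nat} (u v w : 'cV[R]_d) :
  dotv w (u + v) = dotv w u + dotv w v.
Proof. by rewrite !(dotvC w) dotvDl. Qed.

Lemma dotvZr {R : realType} {d : nat} (a : R) (u w : 'cV[R]_d) :
  dotv w (a *: u) = a * dotv w u.
Proof. by rewrite !(dotvC w) dotvZl. Qed.

Lemma dotv_suml {R : realType} {d : nat} (I : finType) (P : pred I) (F : I -> 'cV[R]_d) w :
  dotv (\sum_(i | P i) F i) w = \sum_(i | P i) dotv (F i) w.
Proof.
rewrite /dotv exchange_big /=; apply: eq_bigr => k _.
by rewrite summxE mulr_suml.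
Qed.

Lemma dotv_sumr {R : realType} {d : nat} (I : finType) (P : pred I) (F : I -> 'cV[R]_d) w :
  dotv w (\sum_(i | P i) F i) = \sum_(i | P i) dotv w (F i).
Proof. by rewrite dotvC dotv_suml; apply: eq_bigr => i _; rewrite dotvC. Qed.

Lemma dotvNl {R : realType} {d : nat} (u w : 'cV[R]_d) : dotv (- u) w = - dotv u w.
Proof. by rewrite -scaleN1r dotvZl mulN1r. Qed.

Lemma dotvNr {R : realType} {d : nat} (u w : 'cV[R]_d) : dotv w (- u) = - dotv w u.
Proof. by rewrite !(dotvC w) dotvNl. Qed.

Lemma dotv0l {R : realType} {d : nat} (w : 'cV[R]_d) : dotv 0 w = 0.
Proof. by rewrite /dotv big1 // => k _; rewrite mxE mul0r. Qed.

Lemma dotv_ge0 {R : realType} {d : nat} (u : 'cV[R]_d) : 0 <= dotv u u.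
Proof. by rewrite /dotv sumr_ge0 // => k _; rewrite -expr2 sqr_ge0. Qed.

Lemma dotv_eq0 {R : realType} {d : nat} (u : 'cV[R]_d) : dotv u u = 0 -> u = 0.
Proof.
move=> /eqP; rewrite /dotv psumr_eq0; last by move=> k _; rewrite -expr2 sqr_ge0.
move=> /allP H; apply/matrixP => i j; rewrite (ord1 j) mxE.
have := H i (mem_index_enum i); rewrite -expr2 sqrf_eq0 => /implyP/(_ isT)/eqP.
done.
Qed.

Lemma dotv_basis {R : realType} {d : nat} (k : 'I_d) (a : 'cV[R]_d) :
  dotv (basisv R k) a = a k 0.
Proof.
rewrite /dotv (bigD1 k) //= big1 ?addr0; first by rewrite /basisv mxE !eqxx mul1r.
by move=> j jk; rewrite /basisv mxE (negbTE jk) mul0r.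
Qed.

Lemma norm2_sq {R : realType} {d : nat} (u : 'cV[R]_d) : norm2 u ^+ 2 = dotv u u.
Proof. by rewrite /norm2 sqr_sqrtr // dotv_ge0. Qed.

Lemma norm2_ge0 {R : realType} {d : nat} (u : 'cV[R]_d) : 0 <= norm2 u.
Proof. exact: sqrtr_ge0. Qed.

Lemma CS {R : realType} {d : nat} (u v : 'cV[R]_d) :
  dotv u v ^+ 2 <= dotv u u * dotv v v.
Proof.
have [v0|vn0] := eqVneq (dotv v v) 0.
  by rewrite (dotv_eq0 _ v0) dotvC dotv0l expr0n /= dotv0l mulr0.
have vp : 0 < dotv v v by rewrite lt_def vn0 dotv_ge0.
have := dotv_ge0 (dotv v v *: u - dotv u v *: v).
rewrite !(dotvDl, dotvDr, dotvNl, dotvNr, dotvZl, dotvZr).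
rewrite (dotvC v u) => H.
have : 0 <= dotv v v * (dotv u u * dotv v v - dotv u v ^+ 2) by nra.
by rewrite pmulr_rge0 // subr_ge0.
Qed.

Lemma abs_dotv {R : realType} {d : nat} (u v : 'cV[R]_d) :
  `|dotv u v| <= norm2 u * norm2 v.
Proof.
rewrite -(ger0_norm (mulr_ge0 (norm2_ge0 u) (norm2_ge0 v))).
rewrite -ler_sqr ?nnegrE ?normr_ge0 //.
by rewrite !real_normK ?num_real // exprMn !norm2_sq CS.
Qed.

Lemma norm2D {R : realType} {d : nat} (u v : 'cV[R]_d) :
  norm2 (u + v) <= norm2 u + norm2 v.
Proof.
rewrite -ler_sqr ?nnegrE ?addr_ge0 ?norm2_ge0 //.
rewrite norm2_sq sqrrD !norm2_sq !(dotvDl, dotvDr) (dotvC v u).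
have := abs_dotv u v; have := ler_norm (dotv u v).
rewrite /norm2 => *; lra.
Qed.

Lemma norm2Z {R : realType} {d : nat} (a : R) (u : 'cV[R]_d) :
  norm2 (a *: u) = `|a| * norm2 u.
Proof.
by rewrite /norm2 dotvZl dotvZr mulrA -expr2 sqrtrM ?sqr_ge0 // sqrtr_sqr.
Qed.

Lemma norm2_sum {R : realType} {d : nat} (I : finType) (P : pred I) (F : I -> 'cV[R]_d) :
  norm2 (\sum_(i | P i) F i) <= \sum_(i | P i) norm2 (F i).
Proof.
elim/big_ind2: _ => //.
  by rewrite /norm2 dotv0l sqrtr0.
move=> u a v b Hu Hv; apply: le_trans (norm2D _ _) _; exact: lerD.
Qed.



Lemma D_line {R : realType} {V : normedModType R} (F : V -> R) (w e : V) :
  'D_e F w = 'D_1 (fun h : R => F (h *: e + w)) 0.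
Proof.
rewrite /derive; set g1 := fun h => h^-1 *: _; set g2 := fun h => h^-1 *: _.
suff -> : g1 = g2 by [].
by rewrite funeqE /g1 /g2 => h /=; rewrite addr0 scale0r add0r [_%:A]mulr1.
Qed.

Lemma is_derive_line {R : realType} {V : normedModType R} (F : V -> R) (w e : V) D :
  is_derive (0:R) 1 (fun h : R => F (h *: e + w)) D -> is_derive w e F D.
Proof.
move=> [H1 H2]; apply: DeriveDef; first exact: (derivable1P F w e).2 H1.
by rewrite D_line.
Qed.

Lemma is_derive_line_inv {R : realType} {V : normedModType R} (F : V -> R) (w e : V) D :
  is_derive w e F D -> is_derive (0:R) 1 (fun h : R => F (h *: e + w)) D.
Proof.
move=> [H1 H2]; apply: DeriveDef; first exact: (derivable1P F w e).1 H1.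
by rewrite -D_line.
Qed.

Lemma is_derive_R {R : realType} (g : R -> R) (c b : R) :
  derivable g c 1 -> is_derive c b g (b * derive1 g c).
Proof.
move=> dg; have dfg : differentiable g c by apply/derivable1_diffP.
apply: DeriveDef; first exact: diff_derivable.
by rewrite deriveE // diff1E.
Qed.

Lemma is_derive_dot {R : realType} {d : nat} (g : R -> R) (a e w : 'cV[R]_d) :
  (forall z, derivable g z 1) ->
  is_derive w e (fun u => g (dotv u a)) (derive1 g (dotv w a) * dotv e a).
Proof.
move=> dg; apply: is_derive_line.
have -> : (fun h : R => g (dotv (h *: e + w) a)) =
          (fun h : R => g (h *: dotv e a + dotv w a)).
  by apply/funext => h; rewrite dotvDl dotvZl.
rewrite mulrC; apply: is_derive_line_inv; exact: is_derive_R.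
Qed.

Lemma is_derive_sq {R : realType} {d : nat} (e w : 'cV[R]_d) :
  is_derive w e (fun u => dotv u u) (2 * dotv e w).
Proof.
apply: is_derive_line.
pose p : {poly R} := (dotv e e) *: 'X^2 + (2 * dotv e w) *: 'X + (dotv w w)%:P.
have -> : (fun h : R => dotv (h *: e + w) (h *: e + w)) = horner p.
  apply/funext => h; rewrite /p !hornerE !(dotvDl, dotvDr, dotvZl, dotvZr) (dotvC w e).
  rewrite /=. ring.
have := is_derive_poly p 0.
move=> [H1 H2]; apply: DeriveDef => //; rewrite H2 /p !(derivD, derivZ, derivXn, derivX, derivC) !hornerE /=.
ring.
Qed.

Lemma is_derive_bigsum {R : realType} {V : normedModType R} (I : finType) (P : pred I)
  (f : I -> V -> R) (df : I -> R) (w e : V) :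
  (forall i, is_derive w e (f i) (df i)) ->
  is_derive w e (fun u => \sum_(i | P i) f i u) (\sum_(i | P i) df i).
Proof.
move=> H; rewrite -fct_sumE.
elim/big_ind2: _ => //; first exact: is_derive_cst.
by move=> f1 d1 f2 d2 H1 H2; apply: is_deriveD.
Qed.

Lemma is_derive_regL {R : realType} {n d : nat} (l : R -> R -> R) lam
  (x : 'I_n -> 'cV[R]_d) y (S : {set 'I_n}) (w e : 'cV[R]_d) :
  (forall yv z, derivable (fun t => l t yv) z 1) ->
  is_derive w e (regL l lam x y S)
    (\sum_(i in S) dl1 l (dotv w (x i)) (y i) * dotv e (x i)
      + lam * #|S|%:R * dotv e w).
Proof.
move=> hl.
have -> : regL l lam x y S = (fun u => \sum_(i in S) l (dotv u (x i)) (y i))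
    + (lam * #|S|%:R / 2) \*: (fun u => dotv u u).
  by apply/funext => u; rewrite /regL norm2_sq.
have Hs : is_derive w e (fun u => \sum_(i in S) l (dotv u (x i)) (y i))
    (\sum_(i in S) dl1 l (dotv w (x i)) (y i) * dotv e (x i)).
  apply: (@is_derive_bigsum _ _ _ _ (fun i u => l (dotv u (x i)) (y i))) => i.
  rewrite /dl1 /=; exact: (is_derive_dot (fun t => l t (y i)) (x i) e w (hl (y i))).
have Hq := is_derive_sq e w.
apply: is_derive_eq.
by congr (_ + _); rewrite /GRing.scale /=; field.
Qed.


Definition Gv {R : realType} {n d : nat} (l : R -> R -> R) (lam : R)
  (x : 'I_n -> 'cV[R]_d) (y : 'I_n -> R) (S : {set 'I_n}) (w : 'cV[R]_d) : 'cV[R]_d :=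
  \sum_(i in S) dl1 l (dotv w (x i)) (y i) *: x i + (lam * #|S|%:R) *: w.

Definition Hm {R : realType} {n d : nat} (l : R -> R -> R) (lam : R)
  (x : 'I_n -> 'cV[R]_d) (y : 'I_n -> R) (S : {set 'I_n}) (w : 'cV[R]_d) : 'M[R]_d :=
  \sum_(i in S) dl2 l (dotv w (x i)) (y i) *: (x i *m (x i)^T) + (lam * #|S|%:R)%:M.

Lemma D_regL {R : realType} {n d : nat} (l : R -> R -> R) lam
  (x : 'I_n -> 'cV[R]_d) y (S : {set 'I_n}) (k : 'I_d) :
  (forall yv z, derivable (fun t => l t yv) z 1) ->
  (fun u => 'D_(basisv R k) (regL l lam x y S) u) =
  (fun u => \sum_(i in S) dl1 l (dotv u (x i)) (y i) * x i k 0 + lam * #|S|%:R * u k 0).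
Proof.
move=> hl; apply/funext => u.
rewrite (@derive_val _ _ _ _ _ _ _ (is_derive_regL l lam x y S u (basisv R k) hl)).
rewrite dotv_basis; congr (_ + _); apply: eq_bigr => i _; by rewrite dotv_basis.
Qed.

Lemma grad_regL {R : realType} {n d : nat} (l : R -> R -> R) lam
  (x : 'I_n -> 'cV[R]_d) y (S : {set 'I_n}) (w : 'cV[R]_d) :
  (forall yv z, derivable (fun t => l t yv) z 1) ->
  grad (regL l lam x y S) w = Gv l lam x y S w.
Proof.
move=> hl; apply/matrixP => k j; rewrite (ord1 j) !mxE.
have := D_regL l lam x y S k hl => /(congr1 (fun f => f w)) /= ->.
rewrite summxE; congr (_ + _); apply: eq_bigr => i _; by rewrite !mxE.
Qed.

Lemma grad_term {R : realType} {n d : nat} (l : R -> R -> R)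
  (x : 'I_n -> 'cV[R]_d) y (i : 'I_n) (w : 'cV[R]_d) :
  (forall yv z, derivable (fun t => l t yv) z 1) ->
  grad (fun u => l (dotv u (x i)) (y i)) w = dl1 l (dotv w (x i)) (y i) *: x i.
Proof.
move=> hl; apply/matrixP => k j; rewrite (ord1 j) !mxE.
rewrite (@derive_val _ _ _ _ _ _ _
   (is_derive_dot (fun t => l t (y i)) (x i) (basisv R k) w (hl (y i)))).
by rewrite dotv_basis.
Qed.

Lemma hess_regL {R : realType} {n d : nat} (l : R -> R -> R) lam
  (x : 'I_n -> 'cV[R]_d) y (S : {set 'I_n}) (w : 'cV[R]_d) :
  (forall yv z, derivable (fun t => l t yv) z 1) ->
  (forall yv z, derivable (fun t => dl1 l t yv) z 1) ->
  hess (regL l lam x y S) w = Hm l lam x y S w.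
Proof.
move=> hl hl1; apply/matrixP => k j; rewrite !mxE.
rewrite (D_regL l lam x y S k hl).
have -> : (fun u => \sum_(i in S) dl1 l (dotv u (x i)) (y i) * x i k 0 + lam * #|S|%:R * u k 0)
  = (fun u => \sum_(i in S) (fun t => dl1 l t (y i) * x i k 0) (dotv u (x i))
       + (fun t => lam * #|S|%:R * t) (dotv u (basisv R k))).
  by apply/funext => u; rewrite dotvC dotv_basis.
have Hs : is_derive w (basisv R j)
   (fun u => \sum_(i in S) (fun t => dl1 l t (y i) * x i k 0) (dotv u (x i)))
   (\sum_(i in S) derive1 (fun t => dl1 l t (y i) * x i k 0) (dotv w (x i)) * dotv (basisv R j) (x i)).
  apply: (@is_derive_bigsum _ _ _ _
     (fun i u => (fun t => dl1 l t (y i) * x i k 0) (dotv u (x i)))) => i.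
  apply: is_derive_dot => z; apply: derivableM => //; exact: derivable_cst.
have Hc : is_derive w (basisv R j)
   (fun u => (fun t => lam * #|S|%:R * t) (dotv u (basisv R k)))
   (derive1 (fun t => lam * #|S|%:R * t) (dotv w (basisv R k)) * dotv (basisv R j) (basisv R k)).
  apply: is_derive_dot => z; apply: derivableM => //; exact: derivable_cst.
rewrite (@derive_val _ _ _ _ _ _ _ (is_deriveD Hs Hc)).
rewrite summxE; congr (_ + _).
  apply: eq_bigr => i _; rewrite derive1Mr // !mxE big_ord1 !mxE dotv_basis /dl2.
  by rewrite mulrA.
rewrite (@derive1Ml R (fun t => t)); last exact: derivable_id.
rewrite derive1_id mulr1 dotv_basis /basisv !mxE eqxx andbT.
rewrite (eq_sym j k); case: (k == j) => /=; [exact: mulr1 | exact: mulr0].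
Qed.


Lemma derive_right_le {R : realType} (f : R -> R) (a s e : R) : 0 < e ->
  derivable f a 1 ->
  (forall h, 0 < h -> h < e -> h^-1 * (f (h + a) - f a) <= s) -> 'D_1 f a <= s.
Proof.
move=> e0 dfc H.
rewrite ['D_1 f a]cvg_at_rightE; last exact: dfc.
apply: limr_le.
  rewrite -(cvg_at_rightE (fun h : R => h^-1 *: ((f \o shift a) _ - f a))) //.
  apply: cvg_trans dfc; apply: cvg_app.
  move=> A [e' egt0 Ae]; exists e' => // x xe xgt0; apply: Ae => //.
  exact/lt0r_neq0.
near=> h; rewrite [_%:A]mulr1; apply: H.
  by near: h; exists 1 => /=.
near: h; exists e => //= h; rewrite /ball_ /= sub0r normrN => /(le_lt_trans (ler_norm _)).
done.
Unshelve. all: by end_near. Qed.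

Lemma derive_right_ge {R : realType} (f : R -> R) (a s e : R) : 0 < e ->
  derivable f a 1 ->
  (forall h, 0 < h -> h < e -> s <= h^-1 * (f (h + a) - f a)) -> s <= 'D_1 f a.
Proof.
move=> e0 dfc H.
rewrite ['D_1 f a]cvg_at_rightE; last exact: dfc.
apply: limr_ge.
  rewrite -(cvg_at_rightE (fun h : R => h^-1 *: ((f \o shift a) _ - f a))) //.
  apply: cvg_trans dfc; apply: cvg_app.
  move=> A [e' egt0 Ae]; exists e' => // x xe xgt0; apply: Ae => //.
  exact/lt0r_neq0.
near=> h; rewrite [_%:A]mulr1; apply: H.
  by near: h; exists 1 => /=.
near: h; exists e => //= h; rewrite /ball_ /= sub0r normrN => /(le_lt_trans (ler_norm _)).
done.
Unshelve. all: by end_near. Qed.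

Lemma derive_left_ge {R : realType} (f : R -> R) (a s e : R) : 0 < e ->
  derivable f a 1 ->
  (forall h, h < 0 -> - e < h -> s <= h^-1 * (f (h + a) - f a)) -> s <= 'D_1 f a.
Proof.
move=> e0 dfc H.
rewrite ['D_1 f a]cvg_at_leftE; last exact: dfc.
apply: limr_ge.
  rewrite -(cvg_at_leftE (fun h : R => h^-1 *: ((f \o shift a) _ - f a))) //.
  apply: cvg_trans dfc; apply: cvg_app.
  move=> A [e' egt0 Ae]; exists e' => // x xe xgt0; apply: Ae => //.
  exact/ltr0_neq0.
near=> h; rewrite [_%:A]mulr1; apply: H.
  by near: h; exists 1 => /=.
near: h; exists e => //= h; rewrite /ball_ /= sub0r normrN => /ltr_normlP [].
by move=> H1 _ _; rewrite ltrNl.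
Unshelve. all: by end_near. Qed.

Lemma convex_slope_right {R : realType} (f : R -> R) a b :
  (forall z1 z2 t : R, 0 <= t <= 1 -> f (t * z1 + (1 - t) * z2) <= t * f z1 + (1 - t) * f z2) ->
  a < b -> derivable f a 1 -> 'D_1 f a <= (f b - f a) / (b - a).
Proof.
move=> cvx ab df; apply: (@derive_right_le _ f a _ (b - a)) => //; first by rewrite subr_gt0.
move=> h h0 hb.
have ba0 : 0 < b - a by rewrite subr_gt0.
pose t := h / (b - a).
have t0 : 0 <= t by rewrite /t divr_ge0 // ltW.
have t1 : t <= 1 by rewrite /t ler_pdivrMr // mul1r ltW.
have ht : h + a = t * b + (1 - t) * a by rewrite /t; field; rewrite gt_eqF.
have := cvx b a t; rewrite t0 t1 => /(_ isT); rewrite -ht => Hc.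
have E : t * (f b - f a) = h * ((f b - f a) / (b - a)) by rewrite /t; field; rewrite gt_eqF.
have hu : h * h^-1 = 1 by rewrite mulfV // gt_eqF.
have hu0 : 0 < h^-1 by rewrite invr_gt0.
set s := (f b - f a) / (b - a) in E *.
set X := f (h + a) - f a.
have HX : X <= h * s by rewrite /X -E; lra.
have : 0 <= h^-1 * (h * s - X) by apply: mulr_ge0; [exact: ltW | rewrite subr_ge0].
rewrite mulrBr mulrA (mulrC h^-1) hu mul1r; lra.
Qed.

Lemma convex_slope_left {R : realType} (f : R -> R) a b :
  (forall z1 z2 t : R, 0 <= t <= 1 -> f (t * z1 + (1 - t) * z2) <= t * f z1 + (1 - t) * f z2) ->
  a < b -> derivable f b 1 -> (f b - f a) / (b - a) <= 'D_1 f b.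
Proof.
move=> cvx ab df; apply: (@derive_left_ge _ f b _ (b - a)) => //; first by rewrite subr_gt0.
move=> h h0 hb.
have ba0 : 0 < b - a by rewrite subr_gt0.
pose t := - h / (b - a).
have t0 : 0 <= t by rewrite /t divr_ge0 // ltW // oppr_gt0.
have t1 : t <= 1 by rewrite /t ler_pdivrMr // mul1r ltW // ltrNl.
have ht : h + b = t * a + (1 - t) * b by rewrite /t; field; rewrite gt_eqF.
have := cvx a b t; rewrite t0 t1 => /(_ isT); rewrite -ht => Hc.
have E : t * (f b - f a) = - h * ((f b - f a) / (b - a)) by rewrite /t; field; rewrite gt_eqF.
have hu : h * h^-1 = 1 by rewrite mulfV // lt_eqF.
have hu0 : h^-1 < 0 by rewrite invr_lt0.
set s := (f b - f a) / (b - a) in E *.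
set X := f (h + b) - f b.
have HX : X <= h * s by rewrite /X; lra.
have : 0 <= - h^-1 * (h * s - X) by apply: mulr_ge0; [rewrite oppr_ge0; exact: ltW | rewrite subr_ge0].
rewrite mulNr mulrBr mulrA (mulrC h^-1) hu mul1r; lra.
Qed.

Lemma convex_deriv_mono {R : realType} (f : R -> R) a b :
  (forall z1 z2 t : R, 0 <= t <= 1 -> f (t * z1 + (1 - t) * z2) <= t * f z1 + (1 - t) * f z2) ->
  (forall z, derivable f z 1) -> a <= b -> 'D_1 f a <= 'D_1 f b.
Proof.
move=> cvx df; rewrite le_eqVlt => /orP [/eqP -> // | ab].
exact: le_trans (convex_slope_right f a b cvx ab (df a)) (convex_slope_left f a b cvx ab (df b)).
Qed.

Lemma dl2_ge0 {R : realType} (l : R -> R -> R) :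
  loss_convex l ->
  (forall yv z : R, derivable (fun t => l t yv) z 1) ->
  (forall yv z : R, derivable (fun t => dl1 l t yv) z 1) ->
  forall z yv, 0 <= dl2 l z yv.
Proof.
move=> cvx hl hl1 z yv; rewrite /dl2 derive1E.
apply: (@derive_right_ge _ _ z 0 1) => // h h0 _.
apply: mulr_ge0; first by rewrite invr_ge0; exact: ltW.
rewrite subr_ge0 /dl1 !derive1E.
apply: convex_deriv_mono => //; last by rewrite lerDr ltW.
by move=> z1 z2 t Ht; apply: cvx.
Qed.


Lemma min_D0 {R : realType} {V : normedModType R} (F : V -> R) (w e : V) :
  (forall w', derivable F w' e) -> (forall u, F w <= F u) -> 'D_e F w = 0.
Proof.
move=> dF Hmin; rewrite D_line.
have : is_derive (0:R) 1 (fun h : R => F (h *: e + w)) 0.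
  apply: (@derive1_at_min _ _ (-1) 1).
  - lra.
  - move=> t _; apply/derivable1P.
    have -> : (fun h : R => F ((h *: 1 + t) *: e + w)) = (fun h : R => F (h *: e + (t *: e + w))).
      by apply/funext => h; rewrite [h *: 1]mulr1 scalerDl addrA.
    exact: (derivable1P F (t *: e + w) e).1 (dF _).
  - rewrite in_itv /=; apply/andP; split; lra.
  - by move=> t _; rewrite scale0r add0r.
by move=> [].
Qed.

Lemma dotv_mx {R : realType} {d : nat} (u v : 'cV[R]_d) : dotv u v = (u^T *m v) 0 0.
Proof. by rewrite /dotv mxE; apply: eq_bigr => k _; rewrite mxE. Qed.

Lemma x_xT_mul {R : realType} {d : nat} (a u : 'cV[R]_d) :
  (a *m a^T) *m u = dotv a u *: a.
Proof.
rewrite -mulmxA.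
have -> : a^T *m u = (dotv a u)%:M.
  apply/matrixP => i j; rewrite (ord1 i) (ord1 j) !mxE /dotv; apply: eq_bigr => k _.
  by rewrite mxE.
by rewrite mul_mx_scalar.
Qed.

Lemma Hm_mul {R : realType} {n d : nat} (l : R -> R -> R) (lam : R)
  (x : 'I_n -> 'cV[R]_d) (y : 'I_n -> R) (S : {set 'I_n}) (w u : 'cV[R]_d) :
  Hm l lam x y S w *m u =
  \sum_(i in S) (dl2 l (dotv w (x i)) (y i) * dotv (x i) u) *: x i + (lam * #|S|%:R) *: u.
Proof.
rewrite /Hm mulmxDl mul_scalar_mx mulmx_suml; congr (_ + _).
by apply: eq_bigr => i _; rewrite -scalemxAl x_xT_mul scalerA.
Qed.

Lemma Hm_quad {R : realType} {n d : nat} (l : R -> R -> R) (lam : R)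
  (x : 'I_n -> 'cV[R]_d) (y : 'I_n -> R) (S : {set 'I_n}) (w u : 'cV[R]_d) :
  (forall z yv, 0 <= dl2 l z yv) -> 0 <= lam ->
  lam * #|S|%:R * dotv u u <= dotv u (Hm l lam x y S w *m u).
Proof.
move=> h2 hlam; rewrite Hm_mul dotvDr dotvZr lerDr dotv_sumr.
apply: sumr_ge0 => i _; rewrite dotvZr (dotvC u) -mulrA mulr_ge0 //.
by rewrite -expr2 sqr_ge0.
Qed.

Lemma Hm_unit {R : realType} {n d : nat} (l : R -> R -> R) (lam : R)
  (x : 'I_n -> 'cV[R]_d) (y : 'I_n -> R) (S : {set 'I_n}) (w : 'cV[R]_d) :
  (forall z yv, 0 <= dl2 l z yv) -> 0 < lam -> (0 < #|S|)%N ->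
  Hm l lam x y S w \in unitmx.
Proof.
move=> h2 hlam hS; rewrite unitmxE unitfE; apply/negP => /det0P [r rn0 rH].
have := Hm_quad l lam x y S w r^T h2 (ltW hlam).
have -> : dotv r^T (Hm l lam x y S w *m r^T) = 0.
  by rewrite dotv_mx trmxK mulmxA rH mul0mx mxE.
move=> H0.
have : dotv r^T r^T = 0.
  apply/eqP; rewrite eq_le dotv_ge0 andbT.
  have hc : 0 < lam * #|S|%:R by rewrite mulr_gt0 // ltr0n.
  by rewrite -(pmulr_rle0 _ hc).
move/dotv_eq0 => /(congr1 trmx); rewrite trmxK trmx0 => r0.
by rewrite r0 eqxx in rn0.
Qed.


Lemma card_lt (n k : nat) : (k <= n)%N -> #|[set i : 'I_n | (i < k)%N]| = k.
Proof.
move=> kn; rewrite -sum1_card.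
rewrite (eq_bigl (fun i : 'I_n => (i < k)%N)); last by move=> i; rewrite inE.
by rewrite (big_ord_narrow kn) sum1_card card_ord.
Qed.

Lemma card_ge (n k : nat) : (k <= n)%N -> #|[set i : 'I_n | (k <= i)%N]| = (n - k)%N.
Proof.
move=> kn.
have -> : [set i : 'I_n | (k <= i)%N] = ~: [set i : 'I_n | (i < k)%N].
  by apply/setP => i; rewrite !inE leqNgt.
have := cardsC [set i : 'I_n | (i < k)%N]; rewrite card_lt // card_ord.
move=> h; apply/eqP; rewrite -(eqn_add2l k) subnKC // h //.
Qed.


Lemma sum_split {V : zmodType} (n k : nat) (F : 'I_n -> V) :
  \sum_(i in [set: 'I_n]) F i =
  \sum_(i in [set i : 'I_n | (i < k)%N]) F i + \sum_(i in [set i : 'I_n | (k <= i)%N]) F i.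
Proof.
rewrite (bigID (fun i : 'I_n => (i < k)%N)) /=.
have E1 : \sum_(i in [set: 'I_n] | (i < k)%N) F i = \sum_(i in [set i : 'I_n | (i < k)%N]) F i.
  apply: eq_bigl => i; rewrite !inE /=; exact: erefl.
have E2 : \sum_(i in [set: 'I_n] | ~~ (i < k)%N) F i = \sum_(i in [set i : 'I_n | (k <= i)%N]) F i.
  by apply: eq_bigl => i; rewrite !inE /= -leqNgt.
by rewrite E1 E2.
Qed.

Lemma rem_bound {R : realType} (f df : R -> R) (gamma a t : R) :
  (forall z : R, is_derive z (1:R) f (df z)) -> 0 <= gamma ->
  (forall u v, `|df u - df v| <= gamma * `|u - v|) ->
  `|f (a + t) - f a - df a * t| <= gamma * t ^+ 2.
Proof.
move=> hd g0 hL.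
have dv : forall z, derivable f z 1 by move=> z; case: (hd z).
have key : forall c, `|c - a| <= `|t| -> `|(df c - df a) * t| <= gamma * t ^+ 2.
  move=> c hc; rewrite normrM.
  apply: le_trans (ler_wpM2r (normr_ge0 t) (hL c a)) _.
  rewrite -mulrA; apply: ler_wpM2l => //.
  by rewrite -real_normK ?num_real // expr2; apply: ler_wpM2r.
have [t0|tn0] := eqVneq t 0.
  by rewrite t0 addr0 subrr mulr0 subr0 normr0 expr0n /= mulr0.
move: tn0; rewrite neq_lt => /orP [tneg|tpos].
  have ht : a + t < a by rewrite gtrDl.
  have [c cI Hc] := @MVT _ f df (a + t) a ht (fun z _ => hd z) (derivable_within_continuous (fun z _ => dv z)).
  have -> : f (a + t) - f a - df a * t = (df c - df a) * t.
    have -> : f (a + t) = f a - df c * (a - (a + t)) by rewrite -Hc; ring.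
    ring.
  apply: key; move: cI; rewrite in_itv /= => /andP [h1 h2].
  rewrite (ltr0_norm tneg) ler0_norm; last by rewrite subr_le0 ltW.
  lra.
have ht : a < a + t by rewrite ltrDl.
have [c cI Hc] := @MVT _ f df a (a + t) ht (fun z _ => hd z) (derivable_within_continuous (fun z _ => dv z)).
have -> : f (a + t) - f a - df a * t = (df c - df a) * t.
  rewrite Hc; ring.
apply: key; move: cI; rewrite in_itv /= => /andP [h1 h2].
rewrite (gtr0_norm tpos) ger0_norm; last by rewrite subr_ge0 ltW.
lra.
Qed.


Theorem theorem4 (R : realType) (n m d : nat) (x : 'I_n -> 'cV[R]_d) (y : 'I_n -> R)
    (l : R -> R -> R) (lam C gamma : R) (wstar : 'cV[R]_d) :
  (1 <= m)%N -> (m < n)%N ->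
  loss_convex l ->
  (forall yv z : R, derivable (fun t => l t yv) z 1) ->
  (forall yv z : R, derivable (fun t => dl1 l t yv) z 1) ->
  0 < lam ->
  (* w* = argmin L(. ; D) *)
  (forall w : 'cV[R]_d, regL l lam x y [set: 'I_n] wstar <= regL l lam x y [set: 'I_n] w) ->
  (* gradient bound *)
  (forall (i : 'I_n) (w : 'cV[R]_d),
      norm2 (grad (fun u => l (dotv u (x i)) (y i)) w) <= C) ->
  (* l'' is gamma-Lipschitz *)
  (forall yv a b : R, `|dl2 l a yv - dl2 l b yv| <= gamma * `|a - b|) ->
  (forall i : 'I_n, norm2 (x i) <= 1) ->
  let Dm := [set i : 'I_n | (n - m <= i)%N] in
  let Drest := [set i : 'I_n | (i < n - m)%N] in
  let Delta := (m%:R * lam) *: wstar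
      + \sum_(j in Dm) grad (fun u => l (dotv u (x j)) (y j)) wstar in
  let H := hess (regL l lam x y Drest) wstar in
  let v := invmx H *m Delta in
  let wm := wstar + v in
  norm2 (grad (regL l lam x y Drest) wm) <= gamma * (n - m)%:R * norm2 v ^+ 2
  /\ gamma * (n - m)%:R * norm2 v ^+ 2
     <= 4 * gamma * m%:R ^+ 2 * C ^+ 2 / (lam ^+ 2 * (n - m)%:R).
Proof.
move=> hm hmn cvx hl hl1 hlam hopt hC hLip hx Dm Drest Delta H v wm.
have h2 := dl2_ge0 l cvx hl hl1.
have g0 : 0 <= gamma.
  have := hLip 0 1 0; rewrite subr0 normr1 mulr1; exact: le_trans (normr_ge0 _).
have hN : (0 < n - m)%N by rewrite subn_gt0.
have cN : 0 < (n - m)%:R :> R by rewrite ltr0n.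
have cardR : #|Drest| = (n - m)%N by rewrite card_lt // leq_subr.
have cardM : #|Dm| = m by rewrite card_ge ?leq_subr // subKn // ltnW.
have cardT : #|[set: 'I_n]| = n by rewrite cardsT card_ord.
have Gopt : Gv l lam x y [set: 'I_n] wstar = 0.
  rewrite -grad_regL //; apply/matrixP => k j; rewrite (ord1 j) !mxE.
  apply: min_D0 => // w'.
  by case: (is_derive_regL l lam x y [set: 'I_n] w' (basisv R k) hl).
have HD : H = Hm l lam x y Drest wstar by rewrite /H hess_regL.
have Hunit : H \in unitmx by rewrite HD; apply: Hm_unit => //; rewrite cardR.
have Hv : H *m v = Delta by rewrite /v mulKVmx.
have DeltaE : Delta = (m%:R * lam) *: wstar
    + \sum_(j in Dm) dl1 l (dotv wstar (x j)) (y j) *: x j.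
  by rewrite /Delta; congr (_ + _); apply: eq_bigr => j _; exact: (grad_term l x y j wstar hl).
have GrestW : Gv l lam x y Drest wstar = - Delta.
  apply/eqP; rewrite -addr_eq0; apply/eqP; rewrite -Gopt DeltaE /Gv cardR cardT.
  rewrite (sum_split _ (n - m)) -/Drest -/Dm.
  apply/matrixP => k j; rewrite !mxE (natrB _ (ltnW hmn)); ring.
have c0 : 0 < lam * (n - m)%:R by rewrite mulr_gt0.
split.
  rewrite /wm grad_regL //.
  have E : Gv l lam x y Drest (wstar + v) =
      Gv l lam x y Drest (wstar + v) - (Gv l lam x y Drest wstar + H *m v).
    by rewrite Hv GrestW addNr subr0.
  rewrite E HD Hm_mul /Gv.
  set r := fun i => dl1 l (dotv (wstar + v) (x i)) (y i) - dl1 l (dotv wstar (x i)) (y i)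
                    - dl2 l (dotv wstar (x i)) (y i) * dotv (x i) v.
  have -> : \sum_(i in Drest) dl1 l (dotv (wstar + v) (x i)) (y i) *: x i +
      (lam * #|Drest|%:R) *: (wstar + v) -
      (\sum_(i in Drest) dl1 l (dotv wstar (x i)) (y i) *: x i + (lam * #|Drest|%:R) *: wstar +
       (\sum_(i in Drest) (dl2 l (dotv wstar (x i)) (y i) * dotv (x i) v) *: x i +
        (lam * #|Drest|%:R) *: v)) = \sum_(i in Drest) r i *: x i.
    rewrite /r; under [RHS]eq_bigr => i _ do rewrite !scalerBl.
    rewrite !sumrB; apply/matrixP => k j; rewrite !mxE; ring.
  apply: le_trans (norm2_sum _ _ _) _.
  have hr : forall i, norm2 (r i *: x i) <= gamma * norm2 v ^+ 2.
    move=> i; rewrite norm2Z.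
    have rb : `|r i| <= gamma * dotv v (x i) ^+ 2.
      rewrite /r dotvDl (dotvC (x i) v).
      have Hd : forall z : R, is_derive z (1:R) (fun s => dl1 l s (y i)) (dl2 l z (y i)).
        move=> z; have := derivableP (hl1 (y i) z).
        by rewrite /dl2 derive1E.
      exact: (rem_bound (fun s => dl1 l s (y i)) (fun s => dl2 l s (y i)) gamma
                (dotv wstar (x i)) (dotv v (x i)) Hd g0 (fun u w => hLip (y i) u w)).
    have t2 : dotv v (x i) ^+ 2 <= norm2 v ^+ 2.
      apply: le_trans (CS v (x i)) _.
      rewrite -!norm2_sq -[X in _ <= X]mulr1; apply: ler_wpM2l; first exact: sqr_ge0.
      rewrite -(expr1n _ 2) ler_sqr ?nnegrE ?norm2_ge0 //; exact: hx.
    apply: le_trans (_ : `|r i| * 1 <= _).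
      by apply: ler_wpM2l => //; exact: hx.
    rewrite mulr1; apply: le_trans rb _; exact: ler_wpM2l.
  apply: le_trans (ler_sum _ (fun i _ => hr i)) _.
  by rewrite sumr_const cardR mulrAC mulr_natr.
have norm2N : forall u : 'cV[R]_d, norm2 (- u) = norm2 u.
  by move=> u; rewrite -scaleN1r norm2Z normrN1 mul1r.
have gb : forall i, norm2 (dl1 l (dotv wstar (x i)) (y i) *: x i) <= C.
  by move=> i; rewrite -(grad_term l x y i wstar hl); exact: hC.
have n0 : 0 < n%:R :> R by rewrite ltr0n (leq_ltn_trans _ hmn).
have nw : lam * norm2 wstar <= C.
  move: Gopt; rewrite /Gv cardT => /eqP; rewrite addrC addr_eq0 => /eqP.
  move/(congr1 (@norm2 R d)); rewrite norm2Z norm2N ger0_norm; last by rewrite ltW // mulr_gt0.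
  move=> E.
  have : lam * n%:R * norm2 wstar <= C * n%:R.
    rewrite E; apply: le_trans (norm2_sum _ _ _) _.
    apply: le_trans (ler_sum _ (fun i _ => gb i)) _.
    by rewrite sumr_const cardT mulr_natr.
  by rewrite mulrAC ler_pM2r.
have nD : norm2 Delta <= 2 * m%:R * C.
  rewrite DeltaE; apply: le_trans (norm2D _ _) _.
  have s1 : norm2 ((m%:R * lam) *: wstar) <= m%:R * C.
    rewrite norm2Z ger0_norm; last by rewrite mulr_ge0 // ltW.
    by rewrite -mulrA ler_wpM2l.
  have s2 : norm2 (\sum_(j in Dm) dl1 l (dotv wstar (x j)) (y j) *: x j) <= m%:R * C.
    apply: le_trans (norm2_sum _ _ _) _.
    apply: le_trans (ler_sum _ (fun i _ => gb i)) _.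
    by rewrite sumr_const cardM mulr_natl.
  have := lerD s1 s2; lra.
have nv : lam * (n - m)%:R * norm2 v <= norm2 Delta.
  have q := Hm_quad l lam x y Drest wstar v h2 (ltW hlam).
  rewrite -HD Hv cardR -norm2_sq in q.
  have := abs_dotv v Delta; have := ler_norm (dotv v Delta).
  have := norm2_ge0 v; have := norm2_ge0 Delta.
  move=> a1 a2 a3 a4.
  have q2 : lam * (n - m)%:R * norm2 v ^+ 2 <= norm2 v * norm2 Delta.
    by apply: le_trans q _; apply: le_trans a3 a4.
  have [v0|vpos] := eqVneq (norm2 v) 0.
    by rewrite v0 mulr0.
  have vp : 0 < norm2 v by rewrite lt_def vpos a2.
  nra.
have fin : lam * (n - m)%:R * norm2 v <= 2 * m%:R * C := le_trans nv nD.
rewrite ler_pdivlMr; last by rewrite mulr_gt0 // exprn_gt0.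
have p0 : 0 <= lam * (n - m)%:R * norm2 v by rewrite mulr_ge0 ?norm2_ge0 // ltW.
have sq : (lam * (n - m)%:R * norm2 v) ^+ 2 <= (2 * m%:R * C) ^+ 2.
  by rewrite ler_sqr ?nnegrE //; apply: le_trans p0 fin.
have := ler_wpM2l g0 sq.
set N := (n - m)%:R; set nv' := norm2 v.
move=> hh; apply: le_trans (_ : gamma * (lam * N * nv') ^+ 2 <= _); last first.
  apply: le_trans hh _; rewrite le_eqVlt; apply/orP; left; apply/eqP; ring.
rewrite le_eqVlt; apply/orP; left; apply/eqP; ring.
Qed.
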